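(* Let $G$ be a finitely generated group. If there exists an element $x\in G$ whose normal closure in $G$ is abelian and of finite index in $G$, then there exists a finite symmetric generating set $X$ for $G$ with respect to which the geodesic growth of $G$ is polynomial, i.e. there exist $c,d\in\mathbb{N}$ with $\Gamma_{G,X}(n)\le c\,n^d$ for all $n\in\mathbb{N}$.
   Context: For a group $G$ with a finite symmetric generating set $X$ (symmetric meaning $x\in X\Rightarrow x^{-1}\in X$), a word over $X$ is a geodesic if its length equals the word length (with respect to $X$) of the group element it represents. The geodesic growth function $\Gamma_{G,X}(n)$ is the number of geodesic words of length at most $n$, i.e. the number of geodesics of length at most $n$ starting at $1$ in the Cayley graph of $G$ with respect to $X$. *)

(* Defs.v *)
From Stdlib Require Import ClassicalEpsilon.
From mathcomp Require Import all_boot.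
From Stdlib Require List.
Set Implicit Arguments. Unset Strict Implicit. Unset Printing Implicit Defensive.

Section GroupDefs.
Variables (G : Type) (mul : G -> G -> G) (one : G) (inv : G -> G).

Record group_axioms : Prop := GroupAxioms {
  mulA : forall a b c, mul a (mul b c) = mul (mul a b) c;
  mul1g : forall a, mul one a = a;
  mulg1 : forall a, mul a one = a;
  mulVg : forall a, mul (inv a) a = one;
  mulgV : forall a, mul a (inv a) = one }.

Definition gprod (w : seq G) : G := foldr mul one w.

Definition in_subgroup_gen (S : G -> Prop) (g : G) : Prop :=
  exists w : seq G, (forall y, List.In y w -> S y \/ S (inv y)) /\ g = gprod w.

Definition finitely_generated : Prop :=
  exists S : seq G, forall g, in_subgroup_gen (fun y => List.In y S) g.

Definition normal_closure (x : G) : G -> Prop :=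
  in_subgroup_gen (fun y => exists h, y = mul (inv h) (mul x h)).

Definition abelian_subset (N : G -> Prop) : Prop :=
  forall a b, N a -> N b -> mul a b = mul b a.

Definition finite_index (N : G -> Prop) : Prop :=
  exists T : seq G, forall g, exists t, List.In t T /\ N (mul (inv t) g).

Definition symmetric_gen_set (k : nat) (X : 'I_k -> G) : Prop :=
  injective X /\
  (forall i, exists j, X j = inv (X i)) /\
  (forall g, exists w : seq 'I_k, g = gprod (map X w)).

Definition geodesic (k : nat) (X : 'I_k -> G) (w : seq 'I_k) : Prop :=
  forall w' : seq 'I_k, gprod (map X w') = gprod (map X w) -> size w <= size w'.

Definition decide (P : Prop) : bool :=
  if excluded_middle_informative P then true else false.

Definition geodesic_growth (k : nat) (X : 'I_k -> G) (n : nat) : nat :=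
  \sum_(j < n.+1) #|[pred t : j.-tuple 'I_k | decide (geodesic X (tval t))]|.

End GroupDefs.

(* Main.v *)
Require Import Defs.
From mathcomp Require Import all_boot.
From Stdlib Require Import ClassicalEpsilon.
From Stdlib Require List.
From mathcomp Require Import zify.
From Stdlib Require Import Lia.
Set Implicit Arguments. Unset Strict Implicit. Unset Printing Implicit Defensive.

Section Grp.
Variables (G : Type) (mul : G -> G -> G) (one : G) (inv : G -> G).
Hypothesis HG : group_axioms mul one inv.
Local Notation gp := (gprod mul one).

Lemma mA a b c : mul a (mul b c) = mul (mul a b) c. Proof. by case: HG. Qed.
Lemma m1 a : mul one a = a. Proof. by case: HG. Qed.
Lemma m1r a : mul a one = a. Proof. by case: HG. Qed.
Lemma mV a : mul (inv a) a = one. Proof. by case: HG. Qed.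
Lemma mVr a : mul a (inv a) = one. Proof. by case: HG. Qed.

Lemma inv_uniq a b : mul a b = one -> b = inv a.
Proof. by move=> h; rewrite -[b]m1 -(mV a) -mA h m1r. Qed.
Lemma invK a : inv (inv a) = a.
Proof. by symmetry; apply: inv_uniq; rewrite mV. Qed.
Lemma invM a b : inv (mul a b) = mul (inv b) (inv a).
Proof. by symmetry; apply: inv_uniq; rewrite mA -(mA a) mVr m1r mVr. Qed.
Lemma inv1 : inv one = one.
Proof. by symmetry; apply: inv_uniq; rewrite m1. Qed.
Lemma mKl a b : mul (inv a) (mul a b) = b. Proof. by rewrite mA mV m1. Qed.
Lemma mKr a b : mul a (mul (inv a) b) = b. Proof. by rewrite mA mVr m1. Qed.

Lemma gp_cat u v : gp (u ++ v) = mul (gp u) (gp v).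
Proof. by elim: u => [|a u IH] /=; rewrite ?m1 // IH mA. Qed.
Lemma gp_rcons u a : gp (rcons u a) = mul (gp u) a.
Proof. by rewrite -cats1 gp_cat /= m1r. Qed.

Definition pw a n := gp (nseq n a).
Lemma pwS a n : pw a n.+1 = mul a (pw a n). Proof. by []. Qed.
Lemma pw0 a : pw a 0 = one. Proof. by []. Qed.
Lemma pwD a m n : pw a (m + n) = mul (pw a m) (pw a n).
Proof. by rewrite /pw nseqD gp_cat. Qed.
Lemma pwM a m n : pw a (m * n) = pw (pw a m) n.
Proof. by elim: n => [|n IH]; rewrite ?muln0 // mulnS pwD IH. Qed.
Lemma pw_conj u a n : pw (mul (inv u) (mul a u)) n = mul (inv u) (mul (pw a n) u).
Proof.
elim: n => [|n IH]; first by rewrite /= m1 mV.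
by rewrite pwS IH -!mA mKr !mA.
Qed.
Lemma comm_pw a b n : mul a b = mul b a -> mul a (pw b n) = mul (pw b n) a.
Proof.
move=> h; elim: n => [|n IH]; first by rewrite /= m1 m1r.
by rewrite pwS mA h -mA IH mA.
Qed.
Lemma inv_pw a n : inv (pw a n) = pw (inv a) n.
Proof.
elim: n => [|n IH]; first exact: inv1.
by rewrite pwS invM IH pwS (comm_pw _ (erefl _)).
Qed.

Fixpoint PP (es : seq G) (cs : seq nat) : G :=
  match es with [::] => one | e :: es' => mul (pw e (head 0 cs)) (PP es' (behead cs)) end.

Lemma PP_incr es cs j a : j < size es -> nth one es j = a ->
  (forall e, List.In e es -> mul a e = mul e a) ->
  mul a (PP es cs) = PP es (incr_nth cs j).
Proof.
elim: es cs j => [//|e es IH] cs [|j] /= hj hn hc.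
  rewrite -{}hn in hc *; case: cs => [|c cs] /=; by rewrite mA.
rewrite mA (comm_pw _ (hc e (or_introl erefl))) -mA (IH _ j) //; last first.
  by move=> e' he'; apply: hc; right.
by case: cs => [|c cs] //=; clear; case: j.
Qed.

Lemma sumn_incr cs j : sumn (incr_nth cs j) = (sumn cs).+1.
Proof.
elim: cs j => [|c cs IH] [|j] //=; first by elim: j => //= j ->.
by rewrite IH addnS.
Qed.

Variable x : G.
Local Notation NN := (normal_closure mul one inv x).

Lemma N1 : NN one. Proof. by exists [::]. Qed.
Lemma NM a b : NN a -> NN b -> NN (mul a b).
Proof.
move=> [u [hu ->]] [v [hv ->]]; exists (u ++ v); split; last by rewrite gp_cat.
by move=> y hy; case: (List.in_app_or _ _ _ hy) => ?; [apply: hu|apply: hv].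
Qed.
Lemma NV a : NN a -> NN (inv a).
Proof.
move=> [u [hu ->]]; elim: u hu => [|b u IH] hu /=; first by rewrite inv1; exact: N1.
rewrite invM; apply: NM; first by apply: IH => y hy; apply: hu; right.
exists [:: inv b]; split; last by rewrite /= m1r.
by move=> y [<-|[]]; rewrite invK; case: (hu b (or_introl erefl)); [right|left].
Qed.
Lemma Nconj h : NN (mul (inv h) (mul x h)).
Proof.
exists [:: mul (inv h) (mul x h)]; split; last by rewrite /= m1r.
by move=> y [<-|[]]; left; exists h.
Qed.
Lemma Nx : NN x. Proof. by have := Nconj one; rewrite inv1 m1 m1r. Qed.
Lemma Nconjv h : NN (mul (inv h) (mul (inv x) h)).
Proof. by have := NV (Nconj h); rewrite !invM invK mA. Qed.
Lemma Npw a n : NN a -> NN (pw a n).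
Proof. by move=> ha; elim: n => [|n IH]; [exact: N1|exact: NM]. Qed.
Lemma NPP es cs : (forall e, List.In e es -> NN e) -> NN (PP es cs).
Proof.
elim: es cs => [|e es IH] cs he /=; first exact: N1.
apply: NM; first by apply: Npw; apply: he; left.
by apply: IH => e' h; apply: he; right.
Qed.

Lemma fin_bound (A : Type) (l : seq A) (P : A -> nat -> Prop) :
  (forall a, List.In a l -> exists m, P a m) ->
  exists L, forall a, List.In a l -> exists m, m <= L /\ P a m.
Proof.
elim: l => [|a l IH] h; first by exists 0.
have [L hL] := IH (fun b hb => h b (or_intror hb)).
have [m hm] := h a (or_introl erefl).
exists (maxn m L) => b [<-|hb]; first by exists m; rewrite leq_maxl.
have [m' [h1 h2]] := hL b hb; exists m'; split => //.
exact: leq_trans h1 (leq_maxr _ _).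
Qed.

Lemma In_idx (A : Type) (d : A) (l : seq A) a : List.In a l -> exists i, i < size l /\ nth d l i = a.
Proof.
elim: l => [//|b l IH] [<-|h]; first by exists 0.
by have [i [h1 h2]] := IH h; exists i.+1.
Qed.

Hypothesis Hab : abelian_subset mul NN.
Variable T : seq G.
Hypothesis Hfi : forall g, exists t, List.In t T /\ NN (mul (inv t) g).

Definition U := map inv T.
Lemma nf g : exists n s, NN n /\ List.In s U /\ g = mul n s.
Proof.
have [t [ht hn]] := Hfi (inv g).
exists (inv (mul (inv t) (inv g))), (inv t); split; first exact: NV.
split; first exact: List.in_map.
by rewrite invM !invK -mA mVr m1r.
Qed.

Definition V := T ++ map inv T.
Definition EV := [seq (u, true) | u <- V] ++ [seq (u, false) | u <- V].
Definition ee (p : G * bool) := mul (inv p.1) (mul (if p.2 then x else inv x) p.1).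
Definition E := map ee EV.

Lemma E_N e : List.In e E -> NN e.
Proof.
move=> /List.in_map_iff [[u b] [<- _]]; rewrite /ee /=.
by case: b; [exact: Nconj | exact: Nconjv].
Qed.

Lemma In_EV u b : List.In u V -> List.In (ee (u, b)) E.
Proof.
move=> hu; apply: List.in_map; apply: List.in_or_app.
by case: b; [left|right]; apply: List.in_map.
Qed.

Lemma N_E n : NN n -> exists l : seq nat, all (fun i => i < size E) l /\ n = gp (map (nth one E) l).
Proof.
move=> [u [hu ->]]; elim: u hu => [|y u IH] hu; first by exists [::].
have [l [hl hgl]] := IH (fun z hz => hu z (or_intror hz)); rewrite /= hgl.
suff [b [u' [hu' hy]]] : exists b u', List.In u' V /\ y = ee (u', b).
  have [i [hi hie]] := In_idx one (In_EV b hu').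
  by exists (i :: l); rewrite /= hi hl hie hy.
have key h : exists u', List.In u' V /\ mul (inv h) (mul x h) = ee (u', true).
  have [n' [s' [hn' [hs' ->]]]] := nf h.
  exists s'; split; first by apply: List.in_or_app; right.
  rewrite /ee /= invM -!mA; congr mul; rewrite !mA; congr mul.
  by rewrite -mA (Hab Nx hn') mKl.
case: (hu y (or_introl erefl)) => [[h ->]|[h hh]].
  by have [u' [h1 h2]] := key h; exists true, u'.
have [u' [h1 h2]] := key h; exists false, u'; split => //.
by rewrite -[y]invK hh h2 /ee /= !invM invK !mA.
Qed.

Lemma nth_In' (A : Type) (d : A) (l : seq A) i : i < size l -> List.In (nth d l i) l.
Proof. by elim: l i => [//|a l IH] [|i] //= h; [left|right; apply: IH]. Qed.

Local Notation gE l := (gp (map (nth one E) l)).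

Lemma N_gE l : all (fun i => i < size E) l -> NN (gE l).
Proof.
elim: l => [|i l IH] /=; first by move=> _; exact: N1.
by move=> /andP [hi hl]; apply: NM; [apply: E_N; exact: nth_In' | exact: IH].
Qed.

Lemma PP_nil es : PP es [::] = one.
Proof. by elim: es => //= e es ->; rewrite m1. Qed.

Lemma absorb l cs : all (fun i => i < size E) l ->
  exists cs', sumn cs' = sumn cs + size l /\ mul (gE l) (PP E cs) = PP E cs'.
Proof.
elim: l cs => [|i l IH] cs /=; first by move=> _; exists cs; rewrite addn0 m1.
move=> /andP [hi hl]; have [cs' [h1 h2]] := IH cs hl.
exists (incr_nth cs' i); split; first by rewrite sumn_incr h1 addnS.
rewrite -mA h2; apply: PP_incr => // e he.
by apply: Hab; [apply: E_N; exact: nth_In'|exact: E_N].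
Qed.

Definition Rep g c := exists cs s, List.In s U /\ sumn cs <= c /\ g = mul (PP E cs) s.

Lemma Rep_mono g c c' : c <= c' -> Rep g c -> Rep g c'.
Proof.
move=> hc [cs [s [h1 [h2 h3]]]]; exists cs, s; split => //; split => //.
exact: leq_trans hc.
Qed.

Lemma Rep_one : exists c0, Rep one c0.
Proof.
have [n [s [hn [hs e]]]] := nf one.
have [l [hl hnl]] := N_E hn.
have [cs' [h1 h2]] := absorb [::] hl.
exists (sumn cs'), cs', s; split => //; split => //.
by rewrite e -h2 PP_nil m1r hnl.
Qed.

Lemma Rep_step g c y m : Rep g c ->
  (forall s, List.In s U -> exists l s', all (fun i => i < size E) l /\ List.In s' U /\
       size l <= m /\ mul s y = mul (gE l) s') ->
  Rep (mul g y) (c + m).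
Proof.
move=> [cs [s [hs [hc ->]]]] hy.
have [l [s' [hl [hs' [hm e]]]]] := hy s hs.
have [cs' [h1 h2]] := absorb cs hl.
exists cs', s'; split => //; split; first by rewrite h1 leq_add.
rewrite -mA e mA -h2; congr mul.
by apply: Hab; [apply: NPP; exact: E_N|exact: N_gE].
Qed.

Lemma step_bound (Yl : seq G) : exists L, forall y, List.In y Yl ->
  forall g c, Rep g c -> Rep (mul g y) (c + L).
Proof.
pose Q y m := forall s, List.In s U -> exists l s', all (fun i => i < size E) l /\ List.In s' U /\
       size l <= m /\ mul s y = mul (gE l) s'.
suff [L hL] : exists L, forall y, List.In y Yl -> Q y L.
  by exists L => y hy g c hr; apply: Rep_step => //; exact: hL.
have h1 y : exists Ly, Q y Ly.
  pose R s m := exists l s', all (fun i => i < size E) l /\ List.In s' U /\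
       size l <= m /\ mul s y = mul (gE l) s'.
  have [Ly hLy] := fin_bound (l := U) (P := R) (fun s _ =>
    let: ex_intro n (ex_intro s' (conj hn (conj hs' e))) := nf (mul s y) in
    let: ex_intro l (conj hl hnl) := N_E hn in
    ex_intro _ (size l) (ex_intro _ l (ex_intro _ s' (conj hl (conj hs' (conj (leqnn _) (etrans e (f_equal (fun n => mul n s') hnl)))))))).
  exists Ly => s hs; have [m [hm [l [s' [a [b [c d]]]]]]] := hLy s hs.
  by exists l, s'; do 3!split => //; exact: leq_trans hm.
have [L hL] := fin_bound (l := Yl) (P := fun y m => Q y m) (fun y _ => h1 y).
exists L => y hy s hs; have [m [hm hq]] := hL y hy.
have [l [s' [a [b [c d]]]]] := hq s hs.
by exists l, s'; do 3!split => //; exact: leq_trans hm.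
Qed.

Lemma z_step g c b M : Rep g c ->
  Rep (mul g (pw (if b then x else inv x) M)) (c + M).
Proof.
move=> hr; apply: Rep_step => // s /List.in_map_iff [t [<- ht]].
have [i [hi hie]] := In_idx one (In_EV b (List.in_or_app _ _ _ (or_introl ht))).
exists (nseq M i), (inv t); split; first by rewrite all_nseq hi orbT.
split; first exact: List.in_map.
split; first by rewrite size_nseq.
rewrite map_nseq hie -/(pw _ M) pw_conj -!mA mVr m1r.
by [].
Qed.

Lemma bound_nat (P : nat -> nat -> Prop) : (forall r, exists m, P r m) ->
  forall n, exists L, forall r, r < n -> exists m, m <= L /\ P r m.
Proof.
move=> h; elim=> [|n [L hL]]; first by exists 0.
have [m hm] := h n; exists (maxn m L) => r; rewrite ltnS leq_eqVlt => /orP [/eqP ->|hr].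
  by exists m; rewrite leq_maxl.
have [m' [h1 h2]] := hL r hr; exists m'; split => //; exact: leq_trans h1 (leq_maxr _ _).
Qed.

Lemma EV_V p : List.In p EV -> List.In p.1 V.
Proof.
by move=> h; case: (List.in_app_or _ _ _ h) => /List.in_map_iff [u [<- hu]].
Qed.

Variables (k : nat) (X : 'I_k -> G) (M : nat) (jp jm : 'I_k).
Hypothesis Hgen : forall g, exists w : seq 'I_k, g = gp (map X w).
Hypothesis HM : 0 < M.
Hypothesis Hjp : X jp = pw x M.
Hypothesis Hjm : X jm = pw (inv x) M.
Local Notation gX w := (gp (map X w)).

Lemma gX_cat w1 w2 : gX (w1 ++ w2) = mul (gX w1) (gX w2).
Proof. by rewrite map_cat gp_cat. Qed.

Lemma build : exists C, forall g c, Rep g c ->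
  exists w, gX w = g /\ M * size w <= c + M * C.
Proof.
have [C1 hC1] := fin_bound (l := V) (P := fun u m => exists w1 w2, gX w1 = u /\ gX w2 = inv u /\ size w1 + size w2 <= m)
  (fun u _ => let: ex_intro w1 e1 := Hgen u in let: ex_intro w2 e2 := Hgen (inv u) in
     ex_intro _ _ (ex_intro _ w1 (ex_intro _ w2 (conj (esym e1) (conj (esym e2) (leqnn _)))))).
have [C2 hC2] := fin_bound (l := EV) (P := fun p m => forall r, r < M -> exists w, gX w = pw (ee p) r /\ size w <= m)
  (fun p _ => let: ex_intro L hL := bound_nat (P := fun r m => exists w, gX w = pw (ee p) r /\ size w <= m)
     (fun r => let: ex_intro w e := Hgen (pw (ee p) r) in ex_intro _ _ (ex_intro _ w (conj (esym e) (leqnn _)))) M in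
   ex_intro _ L (fun r hr => let: ex_intro m (conj hm (ex_intro w (conj e hw))) := hL r hr in
      ex_intro _ w (conj e (leq_trans hw hm)))).
have blk p c : List.In p EV -> exists w, gX w = pw (ee p) c /\ M * size w <= c + M * (C1 + C2).
  move=> hp; case: p hp => u b hp.
  have [m1 [hm1 [w1 [w2 [e1 [e2 hs]]]]]] := hC1 u (EV_V hp).
  have [m2 [hm2 hw]] := hC2 _ hp.
  have [wr [er hsr]] := hw (c %% M) (ltn_pmod c HM).
  pose jb := if b then jp else jm.
  exists (w2 ++ nseq (c %/ M) jb ++ w1 ++ wr); split.
    rewrite !gX_cat e1 e2 er map_nseq -/(pw _ _).
    have -> : X jb = pw (if b then x else inv x) M by rewrite /jb; destruct b.
    rewrite {3}(divn_eq c M) mulnC pwD pwM /ee /= pw_conj pw_conj  pw_conj -!mA mKr.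
    by [].
  rewrite !size_cat size_nseq.
  have := leq_divM c M; move: hs hsr hm1 hm2; rewrite mulnC; nia.
have prod P : (forall p, List.In p P -> List.In p EV) -> forall cs,
   exists w, gX w = PP (map ee P) cs /\ M * size w <= sumn cs + M * (C1 + C2) * size P.
  elim: P => [|p P IH] hP cs /=; first by exists [::]; rewrite /= muln0.
  have [w1 [e1 h1]] := blk p (head 0 cs) (hP p (or_introl erefl)).
  have [w2 [e2 h2]] := IH (fun q hq => hP q (or_intror hq)) (behead cs).
  exists (w1 ++ w2); split; first by rewrite gX_cat e1 e2.
  have hsum cs0 : sumn cs0 = head 0 cs0 + sumn (behead cs0) by case: cs0.
  rewrite (hsum cs).
  rewrite size_cat; move: h1 h2; nia.
exists ((C1 + C2) * size EV + C1) => g c [cs [s [hs [hc ->]]]].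
have [w1 [e1 h1]] := prod EV (fun p h => h) cs.
have hsV : List.In s V by apply: List.in_or_app; right.
have [m1 [hm1 [ws [ws2 [es [_ hss]]]]]] := hC1 s hsV.
exists (w1 ++ ws); split; first by rewrite gX_cat e1 es.
rewrite size_cat; move: h1 hss hm1 hc; nia.
Qed.

Definition ztype (i : 'I_k) : bool := decide (X i = pw x M \/ X i = pw (inv x) M).

Lemma ztypeP i : ztype i -> X i = pw x M \/ X i = pw (inv x) M.
Proof. by rewrite /ztype /decide; case: excluded_middle_informative. Qed.

Lemma Rep_word c0 L : Rep one c0 ->
  (forall i, ~~ ztype i -> forall g c, Rep g c -> Rep (mul g (X i)) (c + L)) ->
  forall w, Rep (gX w) (c0 + M * count ztype w + L * count (predC ztype) w).
Proof.
move=> h0 hL; elim/last_ind => [|w i IH]; first by rewrite /= !muln0 !addn0.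
rewrite map_rcons gp_rcons -cats1 !count_cat /=.
case hz: (ztype i) => /=.
  have [e|e] := ztypeP hz.
    apply: (@Rep_mono _ (c0 + M * count ztype w + L * count (predC ztype) w + M)); first nia.
    by rewrite e; apply: (z_step true).
  apply: (@Rep_mono _ (c0 + M * count ztype w + L * count (predC ztype) w + M)); first nia.
  by rewrite e; apply: (z_step false).
apply: (@Rep_mono _ (c0 + M * count ztype w + L * count (predC ztype) w + L)); first nia.
by apply: hL => //; rewrite hz.
Qed.

Definition geo (w : seq 'I_k) := geodesic mul one X w.

Lemma geo_bound c0 L C : Rep one c0 -> M = L.+1 ->
  (forall i, ~~ ztype i -> forall g c, Rep g c -> Rep (mul g (X i)) (c + L)) ->
  (forall g c, Rep g c -> exists w, gX w = g /\ M * size w <= c + M * C) ->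
  forall w, geo w -> count (predC ztype) w <= c0 + M * C.
Proof.
move=> h0 eM hL hB w hw.
have := Rep_word h0 hL w => /hB [w' [e hs]].
have := hw w' e; have := count_predC ztype w.
move: hs; rewrite eM; nia.
Qed.

Definition Adj (w : seq 'I_k) := forall u i j v, w = u ++ i :: j :: v -> ztype i -> ztype j -> i = j.

Lemma geo_Adj w : injective X -> geo w -> Adj w.
Proof.
move=> hX hw u i j v ew hi hj; subst w; case: (excluded_middle_informative (i = j)) => // hne; exfalso.
have hprod : mul (X i) (X j) = one.
  have zmE : pw (inv x) M = inv (pw x M) by rewrite inv_pw.
  case: (ztypeP hi) => ei; case: (ztypeP hj) => ej; try (by exfalso; apply: hne; apply: hX; rewrite ei ej).
    by rewrite ei ej zmE mVr.
  by rewrite ei ej zmE mV.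
have := hw (u ++ v); rewrite !map_cat !gp_cat /=. rewrite (mA (X i)) hprod m1 !size_cat /=.
by move=> /(_ erefl); lia.
Qed.

Definition bld (bs : seq ('I_k * nat)) : seq 'I_k := flatten [seq nseq p.2 p.1 | p <- bs].

Lemma blocks w : Adj w -> exists bs, bld bs = w /\
  size bs <= 2 * count (predC ztype) w + (if w is a :: _ then ztype a else false) /\
  all (fun p => p.2 <= size w) bs /\
  (if w is a :: _ then exists m bs', bs = (a, m.+1) :: bs' else bs = [::]).
Proof.
elim: w => [|a w IH] hA; first by exists [::].
have hA' : Adj w by move=> u i j v e; apply: (hA (a :: u)); rewrite e.
have [bs [e [hs [hall hh]]]] := IH hA'.
have weak : all (fun p : 'I_k * nat => p.2 <= size (a :: w)) bs.
  by apply: sub_all hall => p /= h; apply: leq_trans h (leqnSn _).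
case hz: (ztype a); last first.
  exists ((a, 1) :: bs); split; first by rewrite /bld /= -e.
  split; first by move: hs; rewrite /= hz /=; case: w {IH hA hA' e hall hh weak} => [|b w] /=; [lia | case: (ztype b) => /=; lia].
  split; [by rewrite /= weak | by exists 0, bs].
case: w IH hA hA' e hs hall hh weak => [|b w] IH hA hA' e hs hall hh weak.
  by exists [:: (a, 1)]; rewrite -e hh /bld /= hz; do 3!split => //; exists 0, [::].
have [m [bs' ebs]] := hh.
case hzb: (ztype b).
  have eab : a = b by apply: (hA [::] a b w) => //.
  subst b; exists ((a, m.+2) :: bs'); split; first by rewrite /bld /= -e ebs.
  split; first by move: hs; rewrite ebs hzb /= hz /=; lia.
  split; last by exists m.+1, bs'.
  move: hall; rewrite ebs /= => /andP [h1 h2]; rewrite ltnS h1 /=.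
  by apply: sub_all h2 => p /= h; apply: leq_trans h (leqnSn _).
exists ((a, 1) :: bs); split; first by rewrite /bld /= -e.
split; first by move: hs; rewrite /= hzb hz /=; lia.
by split; [rewrite /= weak | exists 0, bs].
Qed.

Lemma flatten_nil0 (A : Type) n : flatten (nseq n ([::] : seq A)) = [::].
Proof. by elim: n. Qed.

Lemma count_geo j K : injective X -> (forall w, geo w -> count (predC ztype) w <= K) ->
  #|[pred t : j.-tuple 'I_k | decide (geo t)]| <= (k * j.+1) ^ (2 * K + 1).
Proof.
move=> hX hK.
set D := 2 * K + 1.
pose bldD (d : D.-tuple ('I_k * 'I_j.+1)) : seq 'I_k := flatten [seq nseq (val p.2) p.1 | p <- d].
have ex (t : j.-tuple 'I_k) : decide (geo t) -> exists d, bldD d == tval t.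
  rewrite /decide; case: excluded_middle_informative => // hg _.
  have [bs [eb [hs [hall _]]]] := blocks (geo_Adj hX hg).
  have hsD : size bs <= D.
    move: hs (hK _ hg); rewrite /D; case: (tval t) => [|a w] /=; [lia | case: (ztype a) => /=; lia].
  pose bs2 := [seq (p.1, inord p.2 : 'I_j.+1) | p <- bs] ++ nseq (D - size bs) (jp, ord0).
  have hsz : size bs2 == D by rewrite size_cat size_map size_nseq subnKC.
  exists (Tuple hsz); apply/eqP; rewrite /bldD /= /bs2 map_cat flatten_cat map_nseq /= flatten_nil0 cats0.
  rewrite -eb /bld -map_comp.
  congr flatten; apply/eq_in_map => p hp /=; rewrite inordK //.
  by move/allP: hall => /(_ p hp); rewrite size_tuple ltnS.

pose d0 := [tuple of nseq D (jp, (ord0 : 'I_j.+1))].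
pose f (t : j.-tuple 'I_k) := odflt d0 [pick d | bldD d == tval t].
have hf (t : j.-tuple 'I_k) : decide (geo t) -> bldD (f t) = tval t.
  move=> h; rewrite /f; case: pickP => [d /eqP //|hn].
  by have [d hd] := ex t h; rewrite hn in hd.
rewrite -(card_in_imset (f := f)); last first.
  by move=> t1 t2 h1 h2 e; apply: val_inj; change (tval t1 = tval t2); rewrite -(hf _ h1) -(hf _ h2) e.
apply: leq_trans (max_card _) _.
by rewrite card_tuple card_prod !card_ord.
Qed.
End Grp.

Fixpoint dd (A : Type) (l : seq A) : seq A :=
  match l with [::] => [::] | a :: l' => if decide (List.In a l') then dd l' else a :: dd l' end.

Lemma dd_In (A : Type) (l : seq A) a : List.In a (dd l) <-> List.In a l.
Proof.
elim: l => [//|b l IH] /=; rewrite /decide; case: excluded_middle_informative => hb /=.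
  by rewrite IH; split; [right|case=> [<-|]].
by rewrite IH.
Qed.

Lemma dd_inj (A : Type) (d : A) (l : seq A) i j : i < size (dd l) -> j < size (dd l) ->
  nth d (dd l) i = nth d (dd l) j -> i = j.
Proof.
elim: l i j => [//|b l IH] i j /=; rewrite /decide; case: excluded_middle_informative => hb /=.
  exact: IH.
case: i => [|i]; case: j => [|j] //= hi hj.
- by move=> e; exfalso; apply: hb; apply/dd_In; rewrite e; apply: nth_In'.
- by move=> e; exfalso; apply: hb; apply/dd_In; rewrite -e; apply: nth_In'.
- by move=> e; congr S; apply: IH.
Qed.

Lemma idx_list (A : Type) (d : A) (XL : seq A) (u : seq A) :
  (forall y, List.In y u -> List.In y XL) ->
  exists w : seq 'I_(size XL), u = map (fun i : 'I_(size XL) => nth d XL i) w.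
Proof.
elim: u => [|y u IH] h; first by exists [::].
have [w ew] := IH (fun z hz => h z (or_intror hz)).
have [i [hi ei]] := In_idx d (h y (or_introl erefl)).
by exists (Ordinal hi :: w); rewrite /= ei ew.
Qed.

Theorem mainTheorem1 (G : Type) (mul : G -> G -> G) (one : G) (inv : G -> G)
  (HG : group_axioms mul one inv)
  (Hfg : finitely_generated mul one inv)
  (x : G)
  (Hab : abelian_subset mul (normal_closure mul one inv x))
  (Hfi : finite_index mul inv (normal_closure mul one inv x)) :
  exists (k : nat) (X : 'I_k -> G),
    symmetric_gen_set mul one inv X /\
    exists c d : nat, forall n : nat, 1 <= n ->
      geodesic_growth mul one X n <= c * n ^ d.
Proof.
have [S hS] := Hfg.
have [T hT] := Hfi.
pose Yl := S ++ map inv S.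
have [L hL] := step_bound HG Hab hT Yl.
pose M := L.+1.
have HM : 0 < M by [].
pose zp := pw mul one x M.
pose zm := pw mul one (inv x) M.
pose XL := dd [:: zp, zm & Yl].
pose k := size XL.
pose X (i : 'I_k) := nth one XL i.
have hXin y : List.In y XL <-> y = zp \/ y = zm \/ List.In y Yl.
  rewrite dd_In /=; split; [case=> [<-|[<-|]]; auto | case=> [<-|[<-|]]; auto].
have [ip [hip eip]] := In_idx one (proj2 (hXin zp) (or_introl erefl)).
have [im [him eim]] := In_idx one (proj2 (hXin zm) (or_intror (or_introl erefl))).
pose jp : 'I_k := Ordinal hip.
pose jm : 'I_k := Ordinal him.
have Hjp : X jp = zp by [].
have Hjm : X jm = zm by [].
have hinj : injective X.
  by move=> i j e; apply: val_inj; exact: (dd_inj (d := one) (ltn_ord i) (ltn_ord j) e).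
have hgen : forall g, exists w : seq 'I_k, g = gprod mul one (map X w).
  move=> g; have [u [hu eu]] := hS g.
  have hu' : forall y, List.In y u -> List.In y XL.
    move=> y hy; apply/hXin; right; right; apply: List.in_or_app.
    case: (hu y hy) => h; [by left | right].
    by rewrite -(invK HG y); apply: List.in_map.
  have [w ew] := idx_list one hu'.
  by exists w; rewrite eu ew.
exists k, X; split.
  split => //; split => // i.
  have hi : List.In (inv (X i)) XL.
    apply/hXin; have := proj1 (hXin (X i)) (nth_In' one (ltn_ord i)).
    case=> [->|[->|h]].
    - by right; left; rewrite /zp /zm (inv_pw HG).
    - by left; rewrite /zp /zm (inv_pw HG) (invK HG).
    - right; right; apply: List.in_or_app; case: (List.in_app_or _ _ _ h) => h'.
        by right; apply: List.in_map.
      by left; move: h' => /List.in_map_iff [s [<- hs]]; rewrite (invK HG).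
  have [j [hj ej]] := In_idx one hi.
  by exists (Ordinal hj).
have [C hC] := build HG T hgen HM Hjp Hjm.
have [c0 hc0] := Rep_one HG Hab hT.
have hL' : forall i : 'I_k, ~~ ztype mul one inv x X M i ->
    forall g c, Rep mul one inv x T g c -> Rep mul one inv x T (mul g (X i)) (c + L).
  move=> i hz; apply: hL.
  have := proj1 (hXin (X i)) (nth_In' one (ltn_ord i)).
  move: hz; rewrite /ztype /decide; case: excluded_middle_informative => // hn _.
  by case=> [e|[e|//]]; exfalso; apply: hn; [left|right].
have hK := geo_bound HG Hab HM hc0 erefl hL' hC.
set K := c0 + M * C in hK.
have hcnt j := count_geo HG jp HM j hinj hK.
set D := 2 * K + 1 in hcnt.
exists (2 * (2 * k) ^ D), D.+1 => n hn.
rewrite /geodesic_growth.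
apply: (@leq_trans (\sum_(j < n.+1) (k * n.+1) ^ D)).
  apply: leq_sum => j _; apply: leq_trans (hcnt j) _.
  rewrite leq_exp2r ?addn1 //; have := ltn_ord j; nia.
rewrite sum_nat_const card_ord.
have h1 : n.+1 <= 2 * n by lia.
have h2 : (k * n.+1) ^ D <= (2 * k) ^ D * n ^ D.
  by rewrite -expnMn leq_exp2r ?addn1 //; nia.
apply: leq_trans (leq_mul h1 h2) _; rewrite expnS; nia.
Qed.
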